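(* In the protocol IT-HS described in the context, with $f<\frac{n}{3}$ Byzantine parties, if two nonfaulty parties send the messages $\langle key1,val,v\rangle$ and $\langle key1,val',v\rangle$ (for the same view $v$), then $val=val'$.
   Context: Model. $n$ parties with inputs $x_i$; up to $f$ Byzantine (arbitrary behaviour), the rest nonfaulty; authenticated point-to-point channels; partial synchrony: after an unknown time GST every message arrives within known $\Delta$ time and clocks are synchronized, before GST delays are arbitrary but finite. Protocol IT-HS (party $i$). Variables: $lock\gets 0$, $lock\_val\gets x_i$; $key3\gets 0$, $key3\_val\gets x_i$; $key2\gets 0$, $key2\_val\gets x_i$, $prev\_key2\gets -1$; $key1\gets 0$, $key1\_val\gets x_i$, $prev\_key1\gets -1$; $view\gets 0$; $highest\_request[j]\gets 0$, $highest\_abort[j]\gets 0$ for $j\in[n]$. ''Send-upon-join $m$'': for each $j$, send $m$ to $j$ as soon as $highest\_request[j]$ equals the current view. Background: (B1) on $\langle request,v\rangle$ from $j$, $highest\_request[j]\gets\max(highest\_request[j],v)$. (B2) on $\langle done,val\rangle$ from $f+1$ parties with the same $val$: if no $done$ sent yet, send $\langle done,val\rangle$ to all. (B3) on $\langle done,val\rangle$ from $n-f$ parties with the same $val$: decide $val$, terminate. (B4) on $\langle abort,v\rangle$ from $j$ with $highest\_abort[j]<v$: $highest\_abort[j]\gets v$; $u\gets$ the $(f+1)$-th largest entry of $highest\_abort$; if $u>highest\_abort[i]$ send $\langle abort,u\rangle$ to all and set $highest\_abort[i]\gets u$; $w\gets$ the $(n-f)$-th largest entry; if $w\ge view$ set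 $view\gets w+1$. Views: for each value $v$ of $view$, while $view=v$: fresh per-view state; after $11\Delta$ local time send $\langle abort,v\rangle$ to all; ignore other views' messages except $abort$, $done$, $request$; primary $p=(v\bmod n)+1$. View change: send $\langle request,v\rangle$ to all; when $highest\_request[p]=v$ send $\langle suggest,key3,key3\_val,key2,key2\_val,prev\_key2,v\rangle$ to $p$; send-upon-join $\langle proof,key1,key1\_val,prev\_key1,v\rangle$. If $i=p$: upon first $\langle suggest,k3,v3,k2,v2,pk2,v\rangle$ from a party, if $pk2<k2<v$ add $(k2,v2,pk2)$ to $key2\_proofs$; if $k3=0$ add $(k3,v3)$ to $suggestions$; else if $k3<v$ add $(k3,v3)$ as soon as at least $f+1$ triples $(k,w,pk)\in key2\_proofs$ satisfy $k3\le pk$ or ($k3\le k$ and $w=v3$); once $|suggestions|\ge n-f$, send-upon-join $\langle propose,k,w,v\rangle$ for $(k,w)\in suggestions$ with maximal $k$. Message processing: upon first $\langle proof,k1,v1,pk1,v\rangle$ from a party, if $v>k1>pk1$ add $(k1,v1,pk1)$ to $proofs$. Upon first $\langle propose,key,val,v\rangle$ from $p$: if $lock=0$ or $val=lock\_val$, send-upon-join $\langle echo,val,v\rangle$; else if $v>key\ge lock$, then once at least $f+1$ triples $(k,w,pk)\in proofs$ satisfy $lock\le pk$ or ($lock\le k$ and $w\ne lock\_val$), send-upon-join $\langle echo,val,v\rangle$. Upon $\langle echo,val,v\rangle$ from $n-f$ parties with the same $val$: send-upon-join $\langle key1,val,v\rangle$; if $key1\_val\ne val$ then $prev\_key1\gets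 key1$, $key1\_val\gets val$; $key1\gets v$. Upon $\langle key1,val,v\rangle$ from $n-f$ parties (same $val$): send-upon-join $\langle key2,val,v\rangle$; if $key2\_val\ne val$ then $prev\_key2\gets key2$, $key2\_val\gets val$; $key2\gets v$. Upon $\langle key2,val,v\rangle$ from $n-f$ (same $val$): send-upon-join $\langle key3,val,v\rangle$; $key3\gets v$, $key3\_val\gets val$. Upon $\langle key3,val,v\rangle$ from $n-f$ (same $val$): send-upon-join $\langle lock,val,v\rangle$; $lock\gets v$, $lock\_val\gets val$. Upon $\langle lock,val,v\rangle$ from $n-f$ (same $val$): if no $done$ sent yet, send $\langle done,val\rangle$ to all. *)

(* Defs.v *)
From HB Require Import structures.
From mathcomp Require Import all_boot all_order all_algebra.
From Stdlib Require List.

Set Implicit Arguments.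
Unset Strict Implicit.
Unset Printing Implicit Defensive.

Import Order.TTheory GRing.Theory Num.Theory.

Section ITHS.

Variables (n f : nat) (V : eqType).

(* Protocol messages.  Keys are views (nat); "prev" keys may be -1 (int). *)
Inductive msg : Type :=
| MRequest of nat
| MAbort of nat
| MDone of V
| MSuggest of nat & V & nat & V & int & nat         (* <suggest,k3,v3,k2,v2,pk2,v> *)
| MProof of nat & V & int & nat                     (* <proof,k1,v1,pk1,v> *)
| MPropose of nat & V & nat                         (* <propose,key,val,v> *)
| MEcho of V & nat
| MKey1 of V & nat
| MKey2 of V & nat
| MKey3 of V & nat
| MLock of V & nat.

(* (source, destination, message); channels are authenticated. *)
Definition packet : Type := ('I_n * 'I_n * msg)%type.

Record keys := Keys {
  lock : nat; lock_val : V;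
  key3 : nat; key3_val : V;
  key2 : nat; key2_val : V; prev_key2 : int;
  key1 : nat; key1_val : V; prev_key1 : int }.

Record vstate := VState {
  vs_sugg_sent : bool;
  vs_timer : bool;                     (* the 11Delta timer abort already sent *)
  vs_sugg_from : seq 'I_n;             (* primary: parties whose first suggest was processed *)
  vs_key2_proofs : seq (nat * V * int);
  vs_suggestions : seq (nat * V);
  vs_pending : seq (nat * V);          (* suggestions with 0 < k3 < v awaiting their condition *)
  vs_proposed : bool;
  vs_proof_from : seq 'I_n;            (* parties whose first proof was processed *)
  vs_proofs : seq (nat * V * int);
  vs_prop_got : bool;                  (* first propose from the primary processed *)
  vs_echo_wait : option V;             (* conditional echo awaiting f+1 proofs *)
  vs_rcv : seq ('I_n * msg);           (* received echo/key1/key2/key3/lock msgs of this view *)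
  vs_fired : seq (nat * V);            (* (phase,val) quorum handlers already executed *)
  vs_outbox : seq msg;                 (* messages to "send-upon-join" *)
  vs_served : seq ('I_n * nat) }.      (* (j,t): outbox entry t already sent to j *)

Record pstate := PState {
  ks : keys;
  view : nat;
  hreq : 'I_n -> nat;
  habort : 'I_n -> nat;
  done_sent : bool;
  rcv_done : seq ('I_n * V);
  decided : option V;                  (* Some val: decided val and terminated *)
  vs : vstate }.

Definition vs_with_sugg_sent (w : vstate) b :=
  VState b (vs_timer w) (vs_sugg_from w) (vs_key2_proofs w) (vs_suggestions w)
    (vs_pending w) (vs_proposed w) (vs_proof_from w) (vs_proofs w) (vs_prop_got w)
    (vs_echo_wait w) (vs_rcv w) (vs_fired w) (vs_outbox w) (vs_served w).
Definition vs_with_timer (w : vstate) b :=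
  VState (vs_sugg_sent w) b (vs_sugg_from w) (vs_key2_proofs w) (vs_suggestions w)
    (vs_pending w) (vs_proposed w) (vs_proof_from w) (vs_proofs w) (vs_prop_got w)
    (vs_echo_wait w) (vs_rcv w) (vs_fired w) (vs_outbox w) (vs_served w).
Definition vs_with_sugg (w : vstate) from kp sg pd :=
  VState (vs_sugg_sent w) (vs_timer w) from kp sg
    pd (vs_proposed w) (vs_proof_from w) (vs_proofs w) (vs_prop_got w)
    (vs_echo_wait w) (vs_rcv w) (vs_fired w) (vs_outbox w) (vs_served w).
Definition vs_with_proposed (w : vstate) b out :=
  VState (vs_sugg_sent w) (vs_timer w) (vs_sugg_from w) (vs_key2_proofs w) (vs_suggestions w)
    (vs_pending w) b (vs_proof_from w) (vs_proofs w) (vs_prop_got w)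
    (vs_echo_wait w) (vs_rcv w) (vs_fired w) out (vs_served w).
Definition vs_with_proofs (w : vstate) from pr :=
  VState (vs_sugg_sent w) (vs_timer w) (vs_sugg_from w) (vs_key2_proofs w) (vs_suggestions w)
    (vs_pending w) (vs_proposed w) from pr (vs_prop_got w)
    (vs_echo_wait w) (vs_rcv w) (vs_fired w) (vs_outbox w) (vs_served w).
Definition vs_with_prop (w : vstate) got ew out :=
  VState (vs_sugg_sent w) (vs_timer w) (vs_sugg_from w) (vs_key2_proofs w) (vs_suggestions w)
    (vs_pending w) (vs_proposed w) (vs_proof_from w) (vs_proofs w) got
    ew (vs_rcv w) (vs_fired w) out (vs_served w).
Definition vs_with_rcv (w : vstate) r :=
  VState (vs_sugg_sent w) (vs_timer w) (vs_sugg_from w) (vs_key2_proofs w) (vs_suggestions w)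
    (vs_pending w) (vs_proposed w) (vs_proof_from w) (vs_proofs w) (vs_prop_got w)
    (vs_echo_wait w) r (vs_fired w) (vs_outbox w) (vs_served w).
Definition vs_with_fired (w : vstate) fr out :=
  VState (vs_sugg_sent w) (vs_timer w) (vs_sugg_from w) (vs_key2_proofs w) (vs_suggestions w)
    (vs_pending w) (vs_proposed w) (vs_proof_from w) (vs_proofs w) (vs_prop_got w)
    (vs_echo_wait w) (vs_rcv w) fr out (vs_served w).
Definition vs_with_served (w : vstate) sv :=
  VState (vs_sugg_sent w) (vs_timer w) (vs_sugg_from w) (vs_key2_proofs w) (vs_suggestions w)
    (vs_pending w) (vs_proposed w) (vs_proof_from w) (vs_proofs w) (vs_prop_got w)
    (vs_echo_wait w) (vs_rcv w) (vs_fired w) (vs_outbox w) sv.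

Definition set_vs (s : pstate) w :=
  PState (ks s) (view s) (hreq s) (habort s) (done_sent s) (rcv_done s) (decided s) w.
Definition set_hreq (s : pstate) h :=
  PState (ks s) (view s) h (habort s) (done_sent s) (rcv_done s) (decided s) (vs s).
Definition set_habort (s : pstate) h :=
  PState (ks s) (view s) (hreq s) h (done_sent s) (rcv_done s) (decided s) (vs s).
Definition set_rcv_done (s : pstate) r :=
  PState (ks s) (view s) (hreq s) (habort s) (done_sent s) r (decided s) (vs s).
Definition set_done_sent (s : pstate) b :=
  PState (ks s) (view s) (hreq s) (habort s) b (rcv_done s) (decided s) (vs s).
Definition set_decided (s : pstate) d :=
  PState (ks s) (view s) (hreq s) (habort s) (done_sent s) (rcv_done s) d (vs s).
Definition set_ks (s : pstate) k :=
  PState k (view s) (hreq s) (habort s) (done_sent s) (rcv_done s) (decided s) (vs s).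

Definition upd_fun (g : 'I_n -> nat) (j : 'I_n) (a : nat) : 'I_n -> nat :=
  fun k => if k == j then a else g k.

Definition to_all (i : 'I_n) (m : msg) : seq packet :=
  [seq (i, j, m) | j <- enum 'I_n].

(* primary of view v: party (v mod n)+1 in 1-indexed numbering, i.e. v %% n here *)
Definition is_primary (j : 'I_n) (v : nat) : bool := (j : nat) == v %% n.

Definition kth_largest (k : nat) (h : 'I_n -> nat) : nat :=
  nth 0 (sort geq [seq h j | j <- enum 'I_n]) k.-1.

(* phases: 0 = echo, 1 = key1, 2 = key2, 3 = key3, 4 = lock *)
Definition phase_of (m : msg) : option (nat * V * nat) :=
  match m with
  | MEcho val v => Some (0, val, v)
  | MKey1 val v => Some (1, val, v)
  | MKey2 val v => Some (2, val, v)
  | MKey3 val v => Some (3, val, v)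
  | MLock val v => Some (4, val, v)
  | _ => None
  end.

Definition phase_msg (t : nat) (val : V) (v : nat) : msg :=
  match t with
  | 0 => MEcho val v
  | 1 => MKey1 val v
  | 2 => MKey2 val v
  | 3 => MKey3 val v
  | _ => MLock val v
  end.

Definition is_phase (t : nat) (val : V) (v : nat) (m : msg) : bool :=
  phase_of m == Some (t, val, v).

Definition support (P : msg -> bool) (r : seq ('I_n * msg)) : {set 'I_n} :=
  [set j : 'I_n | has (fun jm => (jm.1 == j) && P jm.2) r].

Definition done_support (val : V) (r : seq ('I_n * V)) : {set 'I_n} :=
  [set j : 'I_n | (j, val) \in r].

Definition upd_key1 (k : keys) (val : V) (v : nat) : keys :=
  if key1_val k != val then
    Keys (lock k) (lock_val k) (key3 k) (key3_val k) (key2 k) (key2_val k) (prev_key2 k)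
         v val (Posz (key1 k))
  else
    Keys (lock k) (lock_val k) (key3 k) (key3_val k) (key2 k) (key2_val k) (prev_key2 k)
         v (key1_val k) (prev_key1 k).
Definition upd_key2 (k : keys) (val : V) (v : nat) : keys :=
  if key2_val k != val then
    Keys (lock k) (lock_val k) (key3 k) (key3_val k) v val (Posz (key2 k))
         (key1 k) (key1_val k) (prev_key1 k)
  else
    Keys (lock k) (lock_val k) (key3 k) (key3_val k) v (key2_val k) (prev_key2 k)
         (key1 k) (key1_val k) (prev_key1 k).
Definition upd_key3 (k : keys) (val : V) (v : nat) : keys :=
  Keys (lock k) (lock_val k) v val (key2 k) (key2_val k) (prev_key2 k)
       (key1 k) (key1_val k) (prev_key1 k).
Definition upd_lock (k : keys) (val : V) (v : nat) : keys :=
  Keys v val (key3 k) (key3_val k) (key2 k) (key2_val k) (prev_key2 k)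
       (key1 k) (key1_val k) (prev_key1 k).

Definition upd_keys (t : nat) : keys -> V -> nat -> keys :=
  match t with
  | 0 => upd_key1
  | 1 => upd_key2
  | 2 => upd_key3
  | _ => upd_lock
  end.

(* condition on a key2-proof triple for accepting suggestion (k3,v3) *)
Definition good_k2 (k3 : nat) (v3 : V) (t : nat * V * int) : bool :=
  let '(k, w, pk) := t in ((Posz k3 <= pk)%R || ((k3 <= k) && (w == v3))).

(* condition on a proof triple for echoing a value different from the lock *)
Definition good_proof (k : keys) (t : nat * V * int) : bool :=
  let '(k1, w, pk) := t in
  ((Posz (lock k) <= pk)%R || ((lock k <= k1) && (w != lock_val k))).

(* fresh per-view state; the proof message is queued for send-upon-join *)
Definition fresh_vs (k : keys) (v : nat) : vstate :=
  VState false false [::] [::] [::] [::] false [::] [::] false None [::] [::]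
    [:: MProof (key1 k) (key1_val k) (prev_key1 k) v] [::].

Definition enter_view (i : 'I_n) (s : pstate) (v : nat) : pstate * seq packet :=
  (PState (ks s) v (hreq s) (habort s) (done_sent s) (rcv_done s) (decided s)
          (fresh_vs (ks s) v),
   to_all i (MRequest v)).

Definition init_keys (xi : V) : keys := Keys 0 xi 0 xi 0 xi (-1)%R 0 xi (-1)%R.

Definition init_pstate (xi : V) : pstate :=
  PState (init_keys xi) 0 (fun _ => 0) (fun _ => 0) false [::] None
         (fresh_vs (init_keys xi) 0).

Definition recv (i j : 'I_n) (s : pstate) (m : msg) : pstate * seq packet :=
  let v := view s in
  let k := ks s in
  let w := vs s in
  match m with
  | MRequest r =>
      (set_hreq s (upd_fun (hreq s) j (maxn (hreq s j) r)), [::])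
  | MAbort r =>
      if habort s j < r then
        let ha1 := upd_fun (habort s) j r in
        let u := kth_largest f.+1 ha1 in
        let '(ha2, out1) :=
          if ha1 i < u then (upd_fun ha1 i u, to_all i (MAbort u)) else (ha1, [::]) in
        let s1 := set_habort s ha2 in
        let wv := kth_largest (n - f) ha2 in
        if v <= wv then
          let '(s2, out2) := enter_view i s1 wv.+1 in (s2, out1 ++ out2)
        else (s1, out1)
      else (s, [::])
  | MDone val => (set_rcv_done s (rcv_done s ++ [:: (j, val)]), [::])
  | MSuggest k3 v3 k2 v2 pk2 r =>
      if [&& r == v, is_primary i v & j \notin vs_sugg_from w] then
        let kp := if (pk2 < Posz k2)%R && (k2 < v)
                  then vs_key2_proofs w ++ [:: (k2, v2, pk2)] else vs_key2_proofs w in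
        let sg := if k3 == 0 then vs_suggestions w ++ [:: (k3, v3)] else vs_suggestions w in
        let pd := if (k3 != 0) && (k3 < v) then vs_pending w ++ [:: (k3, v3)]
                  else vs_pending w in
        (set_vs s (vs_with_sugg w (j :: vs_sugg_from w) kp sg pd), [::])
      else (s, [::])
  | MProof k1 v1 pk1 r =>
      if (r == v) && (j \notin vs_proof_from w) then
        let pr := if (k1 < v) && (pk1 < Posz k1)%R
                  then vs_proofs w ++ [:: (k1, v1, pk1)] else vs_proofs w in
        (set_vs s (vs_with_proofs w (j :: vs_proof_from w) pr), [::])
      else (s, [::])
  | MPropose key val r =>
      if [&& r == v, is_primary j v & ~~ vs_prop_got w] then
        if (lock k == 0) || (val == lock_val k) then
          (set_vs s (vs_with_prop w true (vs_echo_wait w) (vs_outbox w ++ [:: MEcho val v])), [::])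
        else if (key < v) && (lock k <= key) then
          (set_vs s (vs_with_prop w true (Some val) (vs_outbox w)), [::])
        else (set_vs s (vs_with_prop w true (vs_echo_wait w) (vs_outbox w)), [::])
      else (s, [::])
  | MEcho _ r | MKey1 _ r | MKey2 _ r | MKey3 _ r | MLock _ r =>
      if r == v then (set_vs s (vs_with_rcv w (vs_rcv w ++ [:: (j, m)])), [::])
      else (s, [::])
  end.

Inductive internal (i : 'I_n) : pstate -> pstate -> seq packet -> Prop :=
| IT_timeout s :                       (* after 11Delta: send <abort,v> to all *)
    ~~ vs_timer (vs s) ->
    internal i s (set_vs s (vs_with_timer (vs s) true)) (to_all i (MAbort (view s)))
| IT_suggest s p :
    ~~ vs_sugg_sent (vs s) -> is_primary p (view s) -> hreq s p = view s ->
    internal i s (set_vs s (vs_with_sugg_sent (vs s) true))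
      [:: (i, p, MSuggest (key3 (ks s)) (key3_val (ks s)) (key2 (ks s)) (key2_val (ks s))
                          (prev_key2 (ks s)) (view s))]
| IT_join s t j :
    t < size (vs_outbox (vs s)) -> hreq s j = view s -> (j, t) \notin vs_served (vs s) ->
    internal i s (set_vs s (vs_with_served (vs s) ((j, t) :: vs_served (vs s))))
      [:: (i, j, nth (MRequest 0) (vs_outbox (vs s)) t)]
| IT_accept s s1 s2 k3 v3 :
    vs_pending (vs s) = s1 ++ (k3, v3) :: s2 ->
    f < count (good_k2 k3 v3) (vs_key2_proofs (vs s)) ->
    internal i s
      (set_vs s (vs_with_sugg (vs s) (vs_sugg_from (vs s)) (vs_key2_proofs (vs s))
                   (vs_suggestions (vs s) ++ [:: (k3, v3)]) (s1 ++ s2))) [::]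
| IT_propose s key val :
    is_primary i (view s) -> ~~ vs_proposed (vs s) ->
    n - f <= size (vs_suggestions (vs s)) ->
    (key, val) \in vs_suggestions (vs s) ->
    all (fun kw => kw.1 <= key) (vs_suggestions (vs s)) ->
    internal i s (set_vs s (vs_with_proposed (vs s) true
                   (vs_outbox (vs s) ++ [:: MPropose key val (view s)]))) [::]
| IT_echo s val :
    vs_echo_wait (vs s) = Some val ->
    f < count (good_proof (ks s)) (vs_proofs (vs s)) ->
    internal i s (set_vs s (vs_with_prop (vs s) (vs_prop_got (vs s)) None
                   (vs_outbox (vs s) ++ [:: MEcho val (view s)]))) [::]
| IT_quorum s t val :
    t < 4 -> (t, val) \notin vs_fired (vs s) ->
    n - f <= #|support (is_phase t val (view s)) (vs_rcv (vs s))| ->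
    internal i s
      (PState (upd_keys t (ks s) val (view s)) (view s) (hreq s) (habort s) (done_sent s)
              (rcv_done s) (decided s)
              (vs_with_fired (vs s) (vs_fired (vs s) ++ [:: (t, val)])
                 (vs_outbox (vs s) ++ [:: phase_msg t.+1 val (view s)]))) [::]
| IT_lockdone s val :
    (4, val) \notin vs_fired (vs s) ->
    n - f <= #|support (is_phase 4 val (view s)) (vs_rcv (vs s))| ->
    internal i s
      (set_done_sent (set_vs s (vs_with_fired (vs s) (vs_fired (vs s) ++ [:: (4, val)])
                                 (vs_outbox (vs s)))) true)
      (if done_sent s then [::] else to_all i (MDone val))
| IT_amplify s val :
    ~~ done_sent s -> f < #|done_support val (rcv_done s)| ->
    internal i s (set_done_sent s true) (to_all i (MDone val))
| IT_decide s val :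
    n - f <= #|done_support val (rcv_done s)| ->
    internal i s (set_decided s (Some val)) [::].

Record config := Config {
  cst : 'I_n -> pstate;       (* local states (meaningful for nonfaulty parties) *)
  cnet : seq packet;
  chist : seq packet }.       (* every message ever sent *)

Definition upd_st (st : 'I_n -> pstate) (i : 'I_n) (s : pstate) : 'I_n -> pstate :=
  fun k => if k == i then s else st k.

Inductive step (F : {set 'I_n}) : config -> config -> Prop :=
| St_deliver st s1 s2 h src dst m s' out :
    dst \notin F -> decided (st dst) = None ->
    recv dst src (st dst) m = (s', out) ->
    step F (Config st (s1 ++ (src, dst, m) :: s2) h)
           (Config (upd_st st dst s') (s1 ++ s2 ++ out) (h ++ out))
| St_internal st net h i s' out :
    i \notin F -> decided (st i) = None ->
    internal i (st i) s' out ->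
    step F (Config st net h) (Config (upd_st st i s') (net ++ out) (h ++ out))
| St_byz st net h j k m :
    j \in F ->
    step F (Config st net h) (Config st (net ++ [:: (j, k, m)]) (h ++ [:: (j, k, m)])).

Definition init_config (x : 'I_n -> V) (F : {set 'I_n}) : config :=
  let out := flatten [seq to_all i (MRequest 0) | i <- enum (~: F)] in
  Config (fun i => init_pstate (x i)) out out.

Inductive reachable (x : 'I_n -> V) (F : {set 'I_n}) : config -> Prop :=
| R_init : reachable x F (init_config x F)
| R_step c c' : reachable x F c -> step F c c' -> reachable x F c'.

End ITHS.

(* Main.v *)
Require Import Defs.
From mathcomp Require Import all_boot all_order all_algebra.
From Stdlib Require List.
From mathcomp Require Import zify.

Module Aux.

Set Implicit Arguments.
Unset Strict Implicit.
Unset Printing Implicit Defensive.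

Section Pf.
Variables (n f : nat) (V : eqType).

Lemma In_cat T (x : T) (s1 s2 : seq T) :
  List.In x (s1 ++ s2) <-> List.In x s1 \/ List.In x s2.
Proof. elim: s1 => [|y s IH] /=; tauto. Qed.

Lemma In_map T U (g : T -> U) y (s : seq T) :
  List.In y (map g s) -> exists x, List.In x s /\ y = g x.
Proof.
elim: s => [|z s IH] //= [<-|/IH [x [H1 H2]]]; [by exists z; auto|by exists x; auto].
Qed.

Lemma In_flatten T x (ss : seq (seq T)) :
  List.In x (flatten ss) -> exists s, List.In s ss /\ List.In x s.
Proof.
elim: ss => [|s ss IH] //= /In_cat [H|/IH [t [H1 H2]]]; [by exists s; auto|by exists t; auto].
Qed.

Lemma In_to_all (i : 'I_n) (m : msg V) p :
  List.In p (to_all i m) -> exists j, p = (i, j, m).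
Proof. move=> H; case: (In_map H) => j [_ ->]; by exists j. Qed.

Lemma In_nth T (d : T) (s : seq T) t : t < size s -> List.In (nth d s t) s.
Proof. elim: s t => [|y s IH] [|t] //= H; [by left|right; exact: IH]. Qed.

Definition Q (h : seq (packet n V)) (val : V) (v : nat) :=
  exists S : {set 'I_n}, n - f <= #|S| /\
    forall k, k \in S -> exists d, List.In (k, d, MEcho val v) h.

Lemma Q_cat h o val v : Q h val v -> Q (h ++ o) val v.
Proof.
move=> [S [H1 H2]]; exists S; split=> // k /H2 [d Hd]; exists d; apply/In_cat; auto.
Qed.

Definition committed (s : pstate n V) (a : V) :=
  (exists v, List.In (MEcho a v) (vs_outbox (vs s))) \/ vs_echo_wait (vs s) = Some a.

Record PI (i : 'I_n) (s : pstate n V) (h : seq (packet n V)) : Prop := {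
 pi_rcv : forall j m, List.In (j, m) (vs_rcv (vs s)) -> List.In (j, i, m) h;
 pi_key1 : forall val v, List.In (MKey1 val v) (vs_outbox (vs s)) -> Q h val v;
 pi_echov : forall a v, List.In (MEcho a v) (vs_outbox (vs s)) -> v = view s;
 pi_hist : forall j a v, List.In (i, j, MEcho a v) h ->
     v < view s \/ (v = view s /\ List.In (MEcho a v) (vs_outbox (vs s)));
 pi_uniq : forall a b, committed s a -> committed s b -> a = b;
 pi_fresh : vs_prop_got (vs s) = false ->
     vs_echo_wait (vs s) = None /\ forall a v, ~ List.In (MEcho a v) (vs_outbox (vs s)) }.

Lemma PI_ext i s h o :
  PI i s h -> (forall p, List.In p o -> p.1.1 <> i \/ forall a v, p.2 <> MEcho a v) ->
  PI i s (h ++ o).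
Proof.
move=> [H1 H2 H3 H4 H5 H6] Ho; split=> //.
- by move=> j m /H1 H; apply/In_cat; left.
- by move=> val v /H2; apply: Q_cat.
- move=> j a v /In_cat [/H4 //|/Ho [//|/(_ a v) //]].
Qed.

Lemma PI_congr_gen i s s' h :
  (forall j m, List.In (j, m) (vs_rcv (vs s')) ->
     List.In (j, m) (vs_rcv (vs s)) \/ List.In (j, i, m) h) ->
  vs_outbox (vs s') = vs_outbox (vs s) ->
  view s' = view s -> vs_echo_wait (vs s') = vs_echo_wait (vs s) ->
  (vs_prop_got (vs s') = false -> vs_prop_got (vs s) = false) -> PI i s h -> PI i s' h.
Proof.
move=> E1 E2 E3 E4 E5 [H1 H2 H3 H4 H5 H6]; split; rewrite ?E2 ?E3 ?E4 //.
- by move=> j m /E1 [/H1|].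
- by move=> a b; rewrite /committed E2 E4; apply: H5.
- by move=> /E5 /H6.
Qed.

Lemma PI_congr i s s' h :
  vs_rcv (vs s') = vs_rcv (vs s) -> vs_outbox (vs s') = vs_outbox (vs s) ->
  view s' = view s -> vs_echo_wait (vs s') = vs_echo_wait (vs s) ->
  (vs_prop_got (vs s') = false -> vs_prop_got (vs s) = false) -> PI i s h -> PI i s' h.
Proof. by move=> E1; apply: PI_congr_gen => j m; rewrite E1; left. Qed.

Lemma PI_prop i s s' h a :
  PI i s h -> vs_prop_got (vs s) = false ->
  vs_rcv (vs s') = vs_rcv (vs s) -> view s' = view s -> vs_prop_got (vs s') = true ->
  ((vs_outbox (vs s') = vs_outbox (vs s) ++ [:: MEcho a (view s)] /\
    vs_echo_wait (vs s') = vs_echo_wait (vs s)) \/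
   (vs_outbox (vs s') = vs_outbox (vs s) /\ vs_echo_wait (vs s') = Some a)) ->
  PI i s' h.
Proof.
move=> [H1 H2 H3 H4 H5 H6] Hp E1 E2 E3 E4.
have [Hw Ho] := H6 Hp.
have Hc : forall b, committed s' b -> b = a.
  move=> b; rewrite /committed.
  case: E4 => [[-> ->]|[-> ->]]; rewrite ?Hw.
  - by case=> [[v /In_cat [/Ho|[[]|]]]|].
  - by case=> [[v /Ho]|[]].
split; rewrite ?E1 ?E2 ?E3 //.
- move=> val v; case: E4 => [[-> _]|[-> _]] //; last exact: H2.
  by move=> /In_cat [/H2 //|[E|[]]]; discriminate E.
- move=> b v; case: E4 => [[-> _]|[-> _]] //; last exact: H3.
  by move=> /In_cat [/H3 //|[[_ ->]|[]]].
- move=> j b v /H4 [|[-> Hin]]; [by left|right; split=> //].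
  by case: E4 => [[-> _]|[-> _]] //; apply/In_cat; left.
- by move=> b c /Hc -> /Hc ->.
Qed.

Lemma PI_enter i s h k k' v' hr ha ds rd dc :
  PI i s h -> view s < v' ->
  PI i (PState k v' hr ha ds rd dc (fresh_vs n k' v')) h.
Proof.
move=> [H1 H2 H3 H4 H5 H6] Hv; split=> //=.
- by move=> val v [].
- by move=> a v [].
- move=> j a v /H4 [H|[-> _]]; left; lia.
- by move=> a b [[v [//|[]]]|//].
- by split=> // a v [].
Qed.

End Pf.
Set Implicit Arguments.
Unset Strict Implicit.
Unset Printing Implicit Defensive.
Section Pf.
Variables (n f : nat) (V : eqType).

Lemma recv_out (i src : 'I_n) (s : pstate n V) m p :
  List.In p (recv f i src s m).2 ->
  p.1.1 = i /\ exists r, p.2 = MAbort V r \/ p.2 = MRequest V r.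
Proof.
rewrite /recv; case: m => //=.
- move=> r; case: ifP => //= _; case: ifP => _ /=; case: ifP => _ /=;
  rewrite ?cats0 //; try move=> /In_cat [];
  move=> /In_to_all [j ->] /=; split=> //; eexists; eauto.
all: by move=> *; match goal with H : List.In _ _ |- _ => move: H end; repeat (case: ifP => _ //=).
Qed.

Lemma PI_recv (i src : 'I_n) (s : pstate n V) h m :
  PI f i s h -> List.In (src, i, m) h -> PI f i (recv f i src s m).1 h.
Proof.
move=> HP Hin; rewrite /recv; case: m Hin => /=.
- by move=> r _; apply: PI_congr HP.
- move=> r _; case: ifP => _ /=; last by [].
  case: ifP => _ /=; case: ifP => Hv /=;
    first [by apply: PI_congr HP | by apply: PI_enter HP _ => /=; lia].
- by move=> val _; apply: PI_congr HP.
- by move=> *; case: ifP => _ //; apply: PI_congr HP.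
- by move=> *; case: ifP => _ //; apply: PI_congr HP.
- move=> key val r _; case: ifP => // /and3P [_ _ Hg].
  have Hp : vs_prop_got (vs s) = false by apply: negbTE.
  case: ifP => _.
    by apply: (PI_prop (a := val) HP Hp) => //=; left.
  case: ifP => _.
    by apply: (PI_prop (a := val) HP Hp) => //=; right.
  by apply: PI_congr HP.
all: move=> val r Hin; case: ifP => _ //; apply: PI_congr_gen HP => //=.
all: by move=> j m /In_cat [|[[<- <-]|[]]]; [left|right].
Qed.
End Pf.
Set Implicit Arguments.
Unset Strict Implicit.
Unset Printing Implicit Defensive.
Section Pf.
Variables (n f : nat) (V : eqType).

Lemma PI_ext2 (i : 'I_n) (s : pstate n V) h o :
  PI f i s h ->
  (forall p, List.In p o -> p.1.1 <> i \/
     forall a v, p.2 = MEcho a v -> List.In (MEcho a v) (vs_outbox (vs s))) ->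
  PI f i s (h ++ o).
Proof.
move=> [H1 H2 H3 H4 H5 H6] Ho; split=> //.
- by move=> j m /H1 H; apply/In_cat; left.
- by move=> val v /H2; apply: Q_cat.
- move=> j a v /In_cat [/H4 //|/Ho [//|/(_ a v erefl) Hin]].
  by right; split=> //; apply: H3 Hin.
Qed.

Lemma PI_addout (i : 'I_n) (s s' : pstate n V) h M :
  PI f i s h -> vs_outbox (vs s') = vs_outbox (vs s) ++ [:: M] ->
  (forall a v, M <> MEcho a v) -> (forall a v, M = MKey1 a v -> Q f h a v) ->
  vs_rcv (vs s') = vs_rcv (vs s) -> view s' = view s ->
  vs_echo_wait (vs s') = vs_echo_wait (vs s) ->
  vs_prop_got (vs s') = vs_prop_got (vs s) -> PI f i s' h.
Proof.
move=> [H1 H2 H3 H4 H5 H6] EO HM HK E1 E2 E3 E4.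
have Ho : forall a v, List.In (MEcho a v) (vs_outbox (vs s')) ->
   List.In (MEcho a v) (vs_outbox (vs s)).
  by move=> a v; rewrite EO => /In_cat [//|[E|[]]]; case: (HM a v).
split; rewrite ?E1 ?E2 ?E3 ?E4 //.
- move=> val v; rewrite EO => /In_cat [/H2 //|[E|[]]]; exact: HK.
- by move=> a v /Ho /H3.
- move=> j a v /H4 [|[-> Hin]]; [by left|right; split=> //].
  by rewrite EO; apply/In_cat; left.
- have Hc : forall b, committed s' b -> committed s b.
    by move=> b [[v /Ho Hb]|Hb]; [left; exists v|right; rewrite -E3].
  by move=> a b /Hc Ha /Hc Hb; apply: H5.
- by move=> /H6 [-> Hn]; split=> // a v /Ho /Hn.
Qed.

Lemma PI_echo (i : 'I_n) (s s' : pstate n V) h val :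
  PI f i s h -> vs_echo_wait (vs s) = Some val ->
  vs_outbox (vs s') = vs_outbox (vs s) ++ [:: MEcho val (view s)] ->
  vs_rcv (vs s') = vs_rcv (vs s) -> view s' = view s ->
  vs_echo_wait (vs s') = None ->
  vs_prop_got (vs s') = vs_prop_got (vs s) -> PI f i s' h.
Proof.
move=> [H1 H2 H3 H4 H5 H6] Hw EO E1 E2 E3 E4.
have Hc : forall b, committed s' b -> committed s b.
  move=> b; rewrite /committed EO E3 => -[[v /In_cat [Hv|[[<- _]|[]]]]|//].
  - by left; exists v.
  - by right.
split; rewrite ?E1 ?E2 ?E3 ?E4 //.
- move=> v w; rewrite EO => /In_cat [/H2 //|[E|[]]] //.
- by move=> a v; rewrite EO => /In_cat [/H3 //|[[_ <-]|[]]].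
- move=> j a v /H4 [|[-> Hin]]; [by left|right; split=> //].
  by rewrite EO; apply/In_cat; left.
- by move=> a b /Hc Ha /Hc Hb; apply: H5.
- by move=> /H6 [Hn _]; rewrite Hn in Hw.
Qed.

Lemma has_In T (p : pred T) (s : seq T) : has p s -> exists x, List.In x s /\ p x.
Proof.
elim: s => [|y s IH] //= /orP [Hy|/IH [x [H1 H2]]]; [by exists y; auto|by exists x; auto].
Qed.

Lemma phase0 (m : msg V) val v : is_phase 0 val v m -> m = MEcho val v.
Proof. by rewrite /is_phase; case: m => //= a b /eqP [<- <-]. Qed.

Lemma Q_support (i : 'I_n) (s : pstate n V) h val v :
  PI f i s h ->
  n - f <= #|Defs.support (is_phase 0 val v) (vs_rcv (vs s))| -> Q f h val v.
Proof.
move=> HP Hc; exists (Defs.support (is_phase 0 val v) (vs_rcv (vs s))); split=> //.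
move=> k; rewrite inE => /has_In [[j m] [Hin /andP [/eqP /= Ejk /phase0 Em]]].
by exists i; rewrite -Ejk -Em; apply: (pi_rcv HP).
Qed.

End Pf.
Set Implicit Arguments.
Unset Strict Implicit.
Unset Printing Implicit Defensive.
Section Pf.
Variables (n f : nat) (V : eqType).

Definition istep_ok (i : 'I_n) (s' : pstate n V) (h out : seq (packet n V)) :=
  PI f i s' (h ++ out) /\
  (forall p, List.In p out -> p.1.1 = i) /\
  (forall j val v, List.In (i, j, MKey1 val v) out -> Q f h val v) /\
  (forall d a v, List.In (i, d, MEcho a v) out ->
     forall d' b, List.In (i, d', MEcho b v) (h ++ out) -> a = b).

Lemma step_noecho (i : 'I_n) (s' : pstate n V) h out :
  PI f i s' h ->
  (forall p, List.In p out -> p.1.1 = i /\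
     forall a v, p.2 <> MEcho a v /\ p.2 <> MKey1 a v) ->
  istep_ok i s' h out.
Proof.
move=> HP Ho. split; [|split; [|split]]. 
- by apply: (PI_ext (o := out) HP) => p /Ho [_ H]; right=> a v; case: (H a v).
- by move=> p /Ho [].
- by move=> j val v /Ho [_ /(_ val v) [_ []]].
- by move=> d a v /Ho [_ /(_ a v) [[]]].
Qed.

Lemma to_all_ok (i : 'I_n) (M : msg V) :
  (forall a v, M <> MEcho a v /\ M <> MKey1 a v) ->
  forall p, List.In p (to_all i M) -> p.1.1 = i /\
     forall a v, p.2 <> MEcho a v /\ p.2 <> MKey1 a v.
Proof. by move=> HM p /In_to_all [j ->]. Qed.

Lemma nil_ok (i : 'I_n) :
  forall p, List.In p ([::] : seq (packet n V)) -> p.1.1 = i /\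
     forall a v, p.2 <> MEcho a v /\ p.2 <> MKey1 a v.
Proof. by []. Qed.

Lemma internal_ok (i : 'I_n) (s s' : pstate n V) h out :
  PI f i s h -> internal f i s s' out -> istep_ok i s' h out.
Proof.
move=> HP HI; case: HI HP => {s' out}.
- move=> s0 _ HP; apply: step_noecho; first by apply: PI_congr HP.
  by apply: to_all_ok.
- move=> s0 p _ _ _ HP; apply: step_noecho; first by apply: PI_congr HP.
  by move=> q [<-|[]]; split=> // a v; split.
- move=> s0 t j Ht _ _ HP.
  set M := nth _ _ t.
  have HM : List.In M (vs_outbox (vs s0)) by apply: In_nth.
  have HP' : PI f i (set_vs s0 (vs_with_served (vs s0) ((j, t) :: vs_served (vs s0)))) h.
    by apply: PI_congr HP.
  split; [|split; [|split]].
  + by apply: (PI_ext2 (o := [:: (i, j, M)]) HP') => p [<-|[]]; right => a v /= <-.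
  + by move=> p [<-|[]].
  + by move=> j' val v [[_ E]|[]]; apply: (pi_key1 HP); rewrite -E.
  + move=> d a v [[_ Ea]|[]] d' b.
    have Hv : v = view s0 by move: HM; rewrite Ea => /(pi_echov HP).
    have Ca : committed s0 a by left; exists v; rewrite -Ea.
    move=> /In_cat [/(pi_hist HP) [|[_ Hb]]|[[_ Eb]|[]]].
    * by rewrite Hv ltnn.
    * by apply: (pi_uniq HP) => //; left; exists v.
    * by move: Ea; rewrite Eb => -[->].
- move=> s0 s1 s2 k3 v3 _ _ HP; apply: step_noecho => //; by apply: PI_congr HP.
- move=> s0 key val _ _ _ _ _ HP; apply: step_noecho => //.
  by apply: PI_addout HP _ _ _ _ _ _ _ => //= a v [].
- move=> s0 val Hw _ HP; apply: step_noecho => //.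
  by apply: PI_echo HP Hw _ _ _ _ _.
- move=> s0 t val Ht _ Hq HP; have HP2 := HP; apply: step_noecho => //.
  apply: PI_addout HP _ _ _ _ _ _ _ => //=.
  + by case: t Ht Hq => [|[|[|[|]]]].
  + move=> a v; case: t Ht Hq => [|[|[|[|]]]] //= _ Hq [<- <-].
    exact: Q_support HP2 Hq.
- move=> s0 val _ _ HP; apply: step_noecho; first by apply: PI_congr HP.
  by case: ifP => _ //; apply: to_all_ok.
- move=> s0 val _ _ HP; apply: step_noecho; first by apply: PI_congr HP.
  by apply: to_all_ok.
- move=> s0 val _ HP; apply: step_noecho => //; by apply: PI_congr HP.
Qed.

End Pf.
Set Implicit Arguments.
Unset Strict Implicit.
Unset Printing Implicit Defensive.
Section Pf.
Variables (n f : nat) (V : eqType) (F : {set 'I_n}).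

Record GI (c : config n V) : Prop := {
 gi_pi : forall i, i \notin F -> PI f i (cst c i) (chist c);
 gi_key1 : forall i j val v, i \notin F ->
    List.In (i, j, MKey1 val v) (chist c) -> Q f (chist c) val v;
 gi_echo : forall i d d' a b v, i \notin F ->
    List.In (i, d, MEcho a v) (chist c) -> List.In (i, d', MEcho b v) (chist c) -> a = b;
 gi_net : forall p, List.In p (cnet c) -> List.In p (chist c) }.

Lemma init_msg (x : 'I_n -> V) p :
  List.In p (chist (init_config x F)) -> p.2 = MRequest V 0.
Proof.
rewrite /init_config /= => H; case: (In_flatten H) => s [Hs Hp].
case: (In_map Hs) => i [_ E]; subst s; by case: (In_to_all Hp) => j ->.
Qed.

Lemma GI_init (x : 'I_n -> V) : GI (init_config x F).
Proof.
split.
- move=> i _; split=> /=.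
  + by move=> j m [].
  + by move=> val v [E|[]]; discriminate E.
  + by move=> a v [E|[]]; discriminate E.
  + by move=> j a v H; have := @init_msg x _ H.
  + by move=> a b [[v [E|[]]]|] //; discriminate E.
  + by split=> // a v [E|[]]; discriminate E.
- by move=> i j val v _ H; have := @init_msg x _ H.
- by move=> i d d' a b v _ H; have := @init_msg x _ H.
- by [].
Qed.

Lemma GI_step c c' : GI c -> step f F c c' -> GI c'.
Proof.
move=> G HS; case: HS G.
- move=> st s1 s2 h src dst m s' out Hdst _ Hr [/= Gpi Gk Ge Gn].
  have Hin : List.In (src, dst, m) h by apply: Gn; apply/In_cat; right; left.
  have Ho : forall p, List.In p out ->
      p.1.1 = dst /\ exists r, p.2 = MAbort V r \/ p.2 = MRequest V r.
    by move=> p Hp; apply: (@recv_out n f V dst src (st dst) m); rewrite Hr.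
  have Ho2 : forall p, List.In p out -> forall a v, p.2 <> MEcho a v /\ p.2 <> MKey1 a v.
    by move=> p /Ho [_ [r [-> | ->]]].
  split=> /=.
  + move=> i Hi; rewrite /upd_st; case: eqP => [->|Hne].
    * have := PI_recv (Gpi dst Hdst) Hin; rewrite Hr /= => HP.
      by apply: (PI_ext (o := out) HP) => p /Ho2 H; right => a v; case: (H a v).
    * apply: (PI_ext (o := out) (Gpi i Hi)) => p /Ho [-> _]; left => E; apply: Hne.
      by rewrite E.
  + move=> i j val v Hi /In_cat [/(Gk _ _ _ _ Hi) /Q_cat //|/Ho2 /(_ val v) []//].
  + move=> i d d' a b v Hi /In_cat [Ha|/Ho2 /(_ a v) []//] /In_cat [Hb|/Ho2 /(_ b v) []//].
    exact: Ge Hi Ha Hb.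
  + move=> p /In_cat [Hp|/In_cat [Hp|Hp]]; apply/In_cat; [left|left|right] => //;
      apply: Gn; apply/In_cat; [left|right; right] => //.
- move=> st net h i s' out Hi _ HI [/= Gpi Gk Ge Gn].
  have [HP [Hsrc [Hk He]]] := internal_ok (h := h) (Gpi i Hi) HI.
  split=> /=.
  + move=> k Hk'; rewrite /upd_st; case: eqP => [->//|Hne].
    apply: (PI_ext (o := out) (Gpi k Hk')) => p /Hsrc E; left => E2; apply: Hne.
    by rewrite -E2 E.
  + move=> k j val v Hk' /In_cat [/(Gk _ _ _ _ Hk') /Q_cat //|H].
    have E := Hsrc _ H; simpl in E; subst k.
    exact/Q_cat/(Hk _ _ _ H).
  + move=> k d d' a b v Hk' Ha Hb.
    case/In_cat: (Ha) => [Ha'|Ha'].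
    * case/In_cat: (Hb) => [Hb'|Hb'].
      - exact: Ge Hk' Ha' Hb'.
      - have E := Hsrc _ Hb'; simpl in E; subst k.
        by symmetry; apply: He Hb' _ _ Ha.
    * have E := Hsrc _ Ha'; simpl in E; subst k.
      exact: He Ha' _ _ Hb.
  + move=> p /In_cat [Hp|Hp]; apply/In_cat; [left; exact: Gn|by right].
- move=> st net h j k m Hj [/= Gpi Gk Ge Gn].
  have Hne : forall i, i \notin F -> forall p, List.In p [:: (j, k, m)] -> p.1.1 <> i.
    by move=> i Hi p [<-|[]] /= E; move: Hi; rewrite -E Hj.
  split=> /=.
  + move=> i Hi; apply: (PI_ext (o := [:: (j, k, m)]) (Gpi i Hi)) => p Hp.
    by left; apply: Hne Hp.
  + move=> i j' val v Hi /In_cat [/(Gk _ _ _ _ Hi) /Q_cat //|H].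
    by case: (Hne i Hi _ H).
  + move=> i d d' a b v Hi /In_cat [Ha|H] /In_cat [Hb|H'].
    * exact: Ge Hi Ha Hb.
    * by case: (Hne i Hi _ H').
    * by case: (Hne i Hi _ H).
    * by case: (Hne i Hi _ H).
  + move=> p /In_cat [Hp|Hp]; apply/In_cat; [left; exact: Gn|by right].
Qed.

Lemma GI_reach x c : reachable f x F c -> GI c.
Proof.
elim=> [|c0 c1 _ IH HS]; first exact: GI_init.
exact: GI_step IH HS.
Qed.

End Pf.
End Aux.
Import Aux.

Theorem lemma2p3 (n f : nat) (V : eqType) (x : 'I_n -> V) (F : {set 'I_n})
  (c : config n V) :
  3 * f < n -> #|F| <= f -> reachable f x F c ->
  forall (i i' j j' : 'I_n) (val val' : V) (v : nat),
    i \notin F -> i' \notin F ->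
    List.In (i, j, MKey1 val v) (chist c) ->
    List.In (i', j', MKey1 val' v) (chist c) ->
    val = val'.
Proof.
move=> Hf HF Hr i i' j j' val val' v Hi Hi' H1 H2.
have G := GI_reach Hr.
have [S [HS HS']] := gi_key1 G Hi H1.
have [T [HT HT']] := gi_key1 G Hi' H2.
have [k Hk HkF] : exists2 k, k \in S :&: T & k \notin F.
  case: (boolP [exists k, (k \in S :&: T) && (k \notin F)]).
    by move=> /existsP [k /andP [Hk1 Hk2]]; exists k.
  move=> /existsPn H; exfalso.
  have Hsub : S :&: T \subset F.
    by apply/subsetP => k Hk; move: (H k); rewrite Hk /= negbK.
  have := subset_leq_card Hsub.
  have := cardsUI S T.
  have := max_card (S :|: T).
  rewrite card_ord; lia.
move/setIP: Hk => [/HS' [d Hd] /HT' [d' Hd']].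
exact: gi_echo G _ _ _ _ _ _ HkF Hd Hd'.
Qed.
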